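(* A uniform preorder $(A,R)$ is a discrete combinatory object (i.e. every relation $r\in R$ is single-valued) if and only if the generic predicate $\mathrm{id}_A\in\mathsf{fam}(A,R)(A)$ is discrete.
   Context: A uniform preorder is a pair $(A,R)$ with $A$ a set and $R\subseteq P(A\times A)$ such that $\mathrm{id}_A\in R$, $s\circ r\in R$ whenever $r,s\in R$, and $s\in R$ whenever $r\in R$ and $s\subseteq r$. $\mathsf{fam}(A,R)$ is the indexed preorder (pseudofunctor $\mathsf{Set}^{op}\to\mathsf{Ord}$) with $\mathsf{fam}(A,R)(I)=(A^I,\le)$, $\varphi\le\psi$ iff $\{(\varphi i,\psi i)\mid i\in I\}\in R$, and reindexing $f^*$ by precomposition. A predicate $\delta\in\mathcal{A}(I)$ of an indexed preorder $\mathcal{A}$ is discrete if for every surjection $e:K\to J$, function $f:K\to I$ and predicate $\varphi\in\mathcal{A}(J)$ with $e^*\varphi\le f^*\delta$, there exists a (necessarily unique) $g:J\to I$ with $g\circ e=f$. *)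

(* Defs.v *)
Definition rel (A : Type) := A -> A -> Prop.

Definition id_rel (A : Type) : rel A := fun a b => a = b.

Definition rel_comp {A : Type} (s r : rel A) : rel A :=
  fun a c => exists b, r a b /\ s b c.

Definition rel_sub {A : Type} (s r : rel A) : Prop := forall a b, s a b -> r a b.

Definition uniform_preorder (A : Type) (R : rel A -> Prop) : Prop :=
  R (id_rel A) /\
  (forall r s : rel A, R r -> R s -> R (rel_comp s r)) /\
  (forall r s : rel A, R r -> rel_sub s r -> R s).

Definition discrete_combinatory_object (A : Type) (R : rel A -> Prop) : Prop :=
  forall r : rel A, R r -> forall a b c, r a b -> r a c -> b = c.

(** The order of fam(A,R)(I) on A^I:
    phi <= psi iff {(phi i, psi i) | i in I} in R. *)
Definition fam_le (A : Type) (R : rel A -> Prop) (I : Type) (phi psi : I -> A) : Prop :=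
  R (fun a b => exists i : I, phi i = a /\ psi i = b).

Definition surjective {K J : Type} (e : K -> J) : Prop := forall j, exists k, e k = j.

(** A predicate delta in fam(A,R)(I) is discrete (reindexing is precomposition). *)
Definition fam_discrete (A : Type) (R : rel A -> Prop) (I : Type) (delta : I -> A) : Prop :=
  forall (K J : Type) (e : K -> J) (f : K -> I) (phi : J -> A),
    surjective e ->
    fam_le A R K (fun k => phi (e k)) (fun k => delta (f k)) ->
    exists g : J -> I, forall k, g (e k) = f k.

(* Main.v *)
Require Import Defs.
From Stdlib Require Import ClassicalEpsilon Classical.

Theorem proposition8p3 (A : Type) (R : rel A -> Prop) :
  uniform_preorder A R ->
  (discrete_combinatory_object A R <-> fam_discrete A R A (fun a : A => a)).
Proof.
  intros [Hid [Hcomp Hdown]]. split.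
  - intros HD K J e f phi Hs Hle.
    unfold fam_le in Hle.
    exists (fun j => f (proj1_sig (constructive_indefinite_description _ (Hs j)))).
    intros k.
    destruct (constructive_indefinite_description _ (Hs (e k))) as [k' Hk']. simpl.
    apply (HD _ Hle (phi (e k))).
    + exists k'. rewrite Hk'. split; reflexivity.
    + exists k. split; reflexivity.
  - intros HF r Hr a b c Hab Hac.
    set (K := {p : A * A | r (fst p) (snd p)}).
    set (J := {x : A | exists y, r x y}).
    set (e := fun k : K => exist (fun x => exists y, r x y) (fst (proj1_sig k))
                 (ex_intro _ (snd (proj1_sig k)) (proj2_sig k)) : J).
    destruct (HF K J e (fun k => snd (proj1_sig k)) (fun j => proj1_sig j)) as [g Hg].
    + intros [x [y Hxy]]. exists (exist _ (x, y) Hxy). reflexivity.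
    + unfold fam_le. apply (Hdown r); [exact Hr|].
      intros x y [[[u v] Huv] [H1 H2]]. simpl in *. subst. exact Huv.
    + pose proof (Hg (exist _ (a, b) Hab)) as G1.
      pose proof (Hg (exist _ (a, c) Hac)) as G2.
      simpl in G1, G2. unfold e in G1, G2; simpl in G1, G2.
      rewrite <- G1, <- G2.
      assert (E : ex_intro (fun y : A => r a y) b Hab = ex_intro (fun y : A => r a y) c Hac)
        by apply proof_irrelevance.
      rewrite E. reflexivity.
Qed.
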